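(* There exists a $9\times 9$ bimagic square whose $81$ entries are pairwise distinct palindromic strings of length $8$ over $\{0,1,2\}$ (read as decimal numbers, leading zeros allowed), with magic sum $S1=99999999$, and such that each of the nine $3\times3$ blocks has entry sum $99999999$.
   Context: A magic square of order $n$ is an $n\times n$ array of numbers in which the sums of the entries of each row, of each column and of each of the two principal diagonals all equal a common value $S1$. It is bimagic if in addition the sums of the squares of the entries of each row, each column and each of the two principal diagonals all equal a common value $S2$. The $3\times3$ blocks are the subarrays with rows $3p+1,\dots,3p+3$ and columns $3q+1,\dots,3q+3$, $p,q\in\{0,1,2\}$. *)

(* Defs.v *)
(* entries are
   binary naturals N so that the concrete 8-digit values are computable. *)
From Stdlib Require Import NArith.
From mathcomp Require Import all_boot.
Set Implicit Arguments. Unset Strict Implicit. Unset Printing Implicit Defensive.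

Definition digitN (x : N) (k : nat) : N :=
  N.modulo (N.div x (N.pow 10 (N.of_nat k))) 10.

Definition pal8_012 (x : N) : Prop :=
  N.lt x (N.pow 10 8) /\
  forall k : 'I_8, N.le (digitN x k) 2 /\ digitN x k = digitN x (7 - k).

Notation "\sumN_ ( i < n ) F" := (\big[N.add/N0]_(i < n) F)
  (at level 41, F at level 41, i, n at level 50).
Notation "\sumN_ ( i < n | P ) F" := (\big[N.add/N0]_(i < n | P) F)
  (at level 41, F at level 41, i, n at level 50).

Section Magic.
Variable n : nat.
Implicit Type A : 'I_n -> 'I_n -> N.

Definition row_sum A (i : 'I_n) := \sumN_(j < n) A i j.
Definition col_sum A (j : 'I_n) := \sumN_(i < n) A i j.
Definition diag_sum A := \sumN_(i < n) A i i.
Definition antidiag_sum A := \sumN_(i < n) A i (rev_ord i).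

Definition magic_with_sum A (S : N) : Prop :=
  (forall i, row_sum A i = S) /\ (forall j, col_sum A j = S) /\
  diag_sum A = S /\ antidiag_sum A = S.

Definition sq_entries A : 'I_n -> 'I_n -> N := fun i j => N.mul (A i j) (A i j).

Definition bimagic_with_sum A (S1 : N) : Prop :=
  magic_with_sum A S1 /\ exists S2, magic_with_sum (sq_entries A) S2.
End Magic.

Definition block_sum (A : 'I_9 -> 'I_9 -> N) (p q : 'I_3) : N :=
  \sumN_(i < 9 | i %/ 3 == p) \sumN_(j < 9 | j %/ 3 == q) A i j.

(* Main.v *)
From HB Require Import structures.
Require Import Defs.
From Stdlib Require Import NArith.
From mathcomp Require Import all_boot.

HB.instance Definition _ := Monoid.isComLaw.Build N N0 N.add N.add_assoc N.add_comm N.add_0_l.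

Definition L : seq (seq N) := [::
  [:: 0%num; 1111110%num; 2222220%num; 11022011%num; 12100121%num; 10211201%num; 22011022%num; 20122102%num; 21200212%num];
  [:: 10122101%num; 11200211%num; 12011021%num; 21111112%num; 22222222%num; 20000002%num; 2100120%num; 211200%num; 1022010%num];
  [:: 20211202%num; 21022012%num; 22100122%num; 1200210%num; 2011020%num; 122100%num; 12222221%num; 10000001%num; 11111111%num];
  [:: 12200221%num; 10011001%num; 11122111%num; 20222202%num; 21000012%num; 22111122%num; 1211210%num; 2022020%num; 100100%num];
  [:: 22022022%num; 20100102%num; 21211212%num; 11000%num; 1122110%num; 2200220%num; 11000011%num; 12111121%num; 10222201%num];
  [:: 2111120%num; 222200%num; 1000010%num; 10100101%num; 11211211%num; 12022021%num; 21122112%num; 22200222%num; 20011002%num];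
  [:: 21100112%num; 22211222%num; 20022002%num; 2122120%num; 200200%num; 1011010%num; 10111101%num; 11222211%num; 12000021%num];
  [:: 1222210%num; 2000020%num; 111100%num; 12211221%num; 10022001%num; 11100111%num; 20200202%num; 21011012%num; 22122122%num];
  [:: 11011011%num; 12122121%num; 10200201%num; 22000022%num; 20111102%num; 21222212%num; 22000%num; 1100110%num; 2211220%num]].

Definition An (i j : nat) : N := nth 0%num (nth [::] L i) j.
Definition A0 (i j : 'I_9) : N := An i j.
Definition S1 : N := 99999999%num.

Lemma forall_ord n (P : nat -> bool) : all P (iota 0 n) -> forall i : 'I_n, P i.
Proof. move=> /allP H i; apply: H; by rewrite mem_iota /= add0n ltn_ord. Qed.
Arguments forall_ord {n P}.

Lemma sum9 (G : nat -> N) : \sumN_(j < 9) G j = foldl N.add 0%num (map G (iota 0 9)).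
Proof. by rewrite !big_ord_recr big_ord0. Qed.

Definition rng := iota 0 9.
Definition rsum (G : nat -> N) := foldl N.add 0%num (map G rng).

Definition pal8b (x : N) : bool :=
  N.ltb x (N.pow 10 8) &&
  all (fun k => N.leb (digitN x k) 2 && N.eqb (digitN x k) (digitN x (7 - k))) (iota 0 8).

Lemma pal8bP x : pal8b x -> pal8_012 x.
Proof.
case/andP=> /N.ltb_lt H H2; split=> // k.
by case/andP: (forall_ord H2 k) => /N.leb_le ? /N.eqb_eq.
Qed.

Lemma inj_check : all (fun i => all (fun j => all (fun i' => all (fun j' =>
  N.eqb (An i j) (An i' j') ==> (i == i') && (j == j')) rng) rng) rng) rng.
Proof. vm_compute. reflexivity. Qed.

Lemma pal_check : all (fun i => all (fun j => pal8b (An i j)) rng) rng.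
Proof. vm_compute. reflexivity. Qed.

Definition S2 : N := 1717172174949495%num.

Lemma magic_check (B : nat -> nat -> N) (S : N) :
  all (fun i => N.eqb (rsum (B i)) S) rng &&
  all (fun j => N.eqb (rsum (fun i => B i j)) S) rng &&
  N.eqb (rsum (fun i => B i i)) S && N.eqb (rsum (fun i => B i (9 - i.+1))) S ->
  magic_with_sum (fun i j : 'I_9 => B i j) S.
Proof.
case/andP=> /andP[] /andP[] H1 H2 /N.eqb_eq H3 /N.eqb_eq H4.
split; [|split; [|split]].
- move=> i; rewrite /row_sum (sum9 (B i)); exact/N.eqb_eq/(forall_ord H1).
- move=> j; rewrite /col_sum (sum9 (fun i => B i j)); exact/N.eqb_eq/(forall_ord H2).
- by rewrite /diag_sum (sum9 (fun i => B i i)).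
- by rewrite /antidiag_sum (sum9 (fun i => B i (9 - i.+1))).
Qed.

Lemma m1 :
  all (fun i => N.eqb (rsum (An i)) S1) rng &&
  all (fun j => N.eqb (rsum (fun i => An i j)) S1) rng &&
  N.eqb (rsum (fun i => An i i)) S1 && N.eqb (rsum (fun i => An i (9 - i.+1))) S1.
Proof. vm_compute. reflexivity. Qed.

Definition Sq (i j : nat) := N.mul (An i j) (An i j).

Lemma m2 :
  all (fun i => N.eqb (rsum (Sq i)) S2) rng &&
  all (fun j => N.eqb (rsum (fun i => Sq i j)) S2) rng &&
  N.eqb (rsum (fun i => Sq i i)) S2 && N.eqb (rsum (fun i => Sq i (9 - i.+1))) S2.
Proof. vm_compute. reflexivity. Qed.

Lemma bl : all (fun p => all (fun q =>
  N.eqb (rsum (fun i => if i %/ 3 == p then rsum (fun j => if j %/ 3 == q then An i j else 0%num) else 0%num)) S1)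
  (iota 0 3)) (iota 0 3).
Proof. vm_compute. reflexivity. Qed.

Theorem mainTheorem6 :
  exists A : 'I_9 -> 'I_9 -> N,
    (forall i j i' j' : 'I_9, A i j = A i' j' -> i = i' /\ j = j') /\
    (forall i j, pal8_012 (A i j)) /\
    bimagic_with_sum A (99999999%num) /\
    (forall p q : 'I_3, block_sum A p q = (99999999%num)).
Proof.
exists A0; split; [|split; [|split]].
- move=> i j i' j' E.
  have := forall_ord (forall_ord (forall_ord (forall_ord inj_check i) j) i') j'.
  rewrite /A0 in E; rewrite E N.eqb_refl /= => /andP[/eqP ? /eqP ?].
  by split; apply: val_inj.
- move=> i j; apply: pal8bP.
  exact: (forall_ord (forall_ord pal_check i) j).
- split; first exact (@magic_check An S1 m1).
  exists S2; exact (@magic_check Sq S2 m2).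
- move=> p q; apply/N.eqb_eq.
  have := forall_ord (forall_ord bl p) q.
  rewrite /block_sum big_mkcond /=.
  rewrite (sum9 (fun i => if i %/ 3 == p then \sumN_(j < 9 | j %/ 3 == q) An i j else 0%num)).
  by under eq_map do rewrite big_mkcond (sum9 (fun j => if j %/ 3 == q then An _ j else 0%num)).
Qed.
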